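(* Let $S=\mathbb{K}[x_1,\dots,x_n]$ be a polynomial ring over a field $\mathbb{K}$, and let $\mathcal{C}$ be a clutter whose vertex set is a subset of $\{x_1,\dots,x_n\}$, with edge ideal $I(\mathcal{C})\subset S$. Then \[ \operatorname{fdepth}(S/I(\mathcal{C}))\ge \epsilon(\mathcal{C})+n-|V(\mathcal{C}^{\mathrm{red}})|. \]
   Context: A clutter $\mathcal{C}$ consists of a finite vertex set $V(\mathcal{C})$ and a collection $E(\mathcal{C})$ of subsets of $V(\mathcal{C})$ (edges), no edge containing another. Vertices are identified with variables; the edge ideal is $I(\mathcal{C})=(\prod_{x\in e}x : e\in E(\mathcal{C}))$. Two distinct vertices are neighbors if some edge contains both. A vertex is isolated if it lies in no edge; $\mathcal{C}^{\mathrm{red}}$ is the clutter obtained by removing isolated vertices. An edge is trivial if it has exactly one vertex. A set $F\subseteq E(\mathcal{C})$ is edgewise dominant if every vertex $v\in V(\mathcal{C}^{\mathrm{red}})$ that is neither contained in an edge of $F$ nor contained in a trivial edge has a neighbor contained in some edge of $F$; $\epsilon(\mathcal{C})=\min\{|F| : F\subseteq E(\mathcal{C}) \text{ edgewise dominant}\}$. For a finitely generated $\mathbb{Z}^n$-graded $S$-module $M$, a prime filtration is a chain $0=M_0\subset M_1\subset\cdots\subset M_m=M$ of $\mathbb{Z}^n$-graded submodules with $M_i/M_{i-1}\cong (S/P_i)(-\mathbf{a}_i)$ for some $\mathbf{a}_i\in\mathbb{Z}^n$ and monomial prime ideals $P_i$; its filtration depth is $\min_i \dim(S/P_i)$, and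 $\operatorname{fdepth}(M)$ is the maximum of the filtration depths of all prime filtrations of $M$. *)

(* Defs.v *)
From HB Require Import structures.
From mathcomp Require Import all_boot all_order all_algebra.
From mathcomp Require Export mpoly.
Set Implicit Arguments. Unset Strict Implicit. Unset Printing Implicit Defensive.
Import GRing.Theory.
Local Open Scope ring_scope.

(* Variables x_1..x_n are indexed by 'I_n.  A clutter on a subset of the
   variables is given by a vertex set V : {set 'I_n} and an edge set
   E : {set {set 'I_n}}. *)

Section Clutter.
Variable n : nat.

Definition is_clutter (V : {set 'I_n}) (E : {set {set 'I_n}}) : Prop :=
  (forall e, e \in E -> e \subset V) /\
  (forall e f, e \in E -> f \in E -> e \subset f -> e = f).

Definition Vred (E : {set {set 'I_n}}) : {set 'I_n} := \bigcup_(e in E) e.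

Definition neighbors (E : {set {set 'I_n}}) (v w : 'I_n) : bool :=
  (v != w) && [exists e in E, (v \in e) && (w \in e)].

Definition edgewise_dominant (E F : {set {set 'I_n}}) : bool :=
  (F \subset E) &&
  [forall v in Vred E,
     ((~~ [exists f in F, v \in f]) && ([set v] \notin E)) ==>
     [exists w, neighbors E v w && [exists f in F, w \in f]]].

(* epsilon(C) = min |F| over edgewise dominant F; E itself is edgewise
   dominant, so #|E| is an upper bound used as the neutral element. *)
Definition epsilon (E : {set {set 'I_n}}) : nat :=
  \big[minn/#|E|]_(F in powerset E | edgewise_dominant E F) #|F|.
End Clutter.

Section Ideals.
Variables (n : nat) (K : fieldType).
Local Notation S := {mpoly K[n]}.

Definition is_ideal (J : S -> Prop) : Prop :=
  J 0 /\ (forall p q, J p -> J q -> J (p + q)) /\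
  (forall s p, J p -> J (s * p)).

(* Z^n-graded (= monomial) ideal: closed under taking homogeneous
   components, i.e. terms c * x^m. *)
Definition is_graded (J : S -> Prop) : Prop :=
  forall p (m : 'X_{1..n}), J p -> J ((p@_m) *: 'X_[m]).

Definition edge_ideal (E : {set {set 'I_n}}) (p : S) : Prop :=
  exists q : {set 'I_n} -> S, p = \sum_(e in E) q e * \prod_(i in e) 'X_i.

Definition mon_prime (Q : {set 'I_n}) (p : S) : Prop :=
  exists q : 'I_n -> S, p = \sum_(i in Q) q i * 'X_i.

(* Krull dimension of S / P_Q *)
Definition dim_quot_mon_prime (Q : {set 'I_n}) : nat := n - #|Q|.

(* Graded submodules of M = S/I are J/I with J a graded ideal containing I.
   Step i of the chain: M_{i+1}/M_i = J (i+1) / J i is isomorphic, as a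
   Z^n-graded module, to (S/P_Q)(-a); equivalently (the image of 1 being
   the class of x^a up to a nonzero scalar): J (i+1) = J i + S x^a and
   (J i : x^a) = P_Q. *)
Definition filtration_step (J : nat -> S -> Prop) (i : nat)
    (Q : {set 'I_n}) (a : 'X_{1..n}) : Prop :=
  (forall p, J i.+1 p <-> exists r s, J i r /\ p = r + s * 'X_[a]) /\
  (forall s, J i (s * 'X_[a]) <-> mon_prime Q s).

(* A prime filtration 0 = M_0 ⊂ ... ⊂ M_m = S/I, encoded by ideals
   I = J 0 ⊆ J 1 ⊆ ... ⊆ J m = S, whose filtration depth
   (min_i dim S/P_i) is at least k. *)
Definition prime_filtration_depth_ge (I : S -> Prop) (m : nat)
    (J : nat -> S -> Prop) (k : nat) : Prop :=
  (forall p, J 0%N p <-> I p) /\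
  (forall p, J m p) /\
  (forall i, (i <= m)%N -> is_ideal (J i) /\ is_graded (J i)) /\
  (forall i p, (i < m)%N -> J i p -> J i.+1 p) /\
  (forall i, (i < m)%N -> exists Q a,
      filtration_step J i Q a /\ (k <= dim_quot_mon_prime Q)%N).

(* fdepth(S/I) >= k : some prime filtration has filtration depth >= k
   (fdepth is the maximum of the filtration depths). *)
Definition fdepth_ge (I : S -> Prop) (k : nat) : Prop :=
  exists m J, prime_filtration_depth_ge I m J k.
End Ideals.

(* Main.v *)
Require Import Defs.
From HB Require Import structures.
From mathcomp Require Import all_boot all_order all_algebra.
From mathcomp Require Import mpoly.
From mathcomp Require Import zify ring.
Set Implicit Arguments. Unset Strict Implicit. Unset Printing Implicit Defensive.
Import GRing.Theory.
Local Open Scope ring_scope.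




Lemma mcoeffMXg n (K : fieldType) (p : {mpoly K[n]}) b m :
  (p * 'X_[b])@_m = if (b <= m)%MM then p@_(m - b) else 0.
Proof.
case: ifP => h.
  by rewrite -{1}(submK h) addmC mcoeffMX.
rewrite {1}(mpolyE p) mulr_suml raddf_sum /= big1 // => k _.
rewrite -scalerAl -mpolyXD mcoeffZ mcoeffX.
case: eqP => [e|]; last by rewrite mulr0.
by move: h; rewrite -e lem_addl.
Qed.

Definition gen n (K : fieldType) (T : finType) (A : {set T}) (b : T -> 'X_{1..n})
  (p : {mpoly K[n]}) : Prop :=
  exists q : T -> {mpoly K[n]}, p = \sum_(t in A) q t * 'X_[b t].

Lemma gen_ideal n (K : fieldType) (T : finType) (A : {set T}) (b : T -> 'X_{1..n}) :
  is_ideal (@gen n K T A b).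
Proof.
split; first by exists (fun _ => 0); rewrite big1 // => t _; rewrite mul0r.
split.
  move=> p q [f ->] [g ->]; exists (fun t => f t + g t).
  by rewrite -big_split /=; apply: eq_bigr => t _; rewrite mulrDl.
move=> s p [f ->]; exists (fun t => s * f t).
by rewrite mulr_sumr; apply: eq_bigr => t _; rewrite mulrA.
Qed.

Lemma gen_term n (K : fieldType) (T : finType) (A : {set T}) (b : T -> 'X_{1..n}) t s :
  t \in A -> @gen n K T A b (s * 'X_[b t]).
Proof.
move=> tA; exists (fun t' => if t' == t then s else 0).
rewrite (bigD1 t) //= eqxx big1 ?addr0 // => t' /andP[_ /negbTE ->].
by rewrite mul0r.
Qed.

Lemma gen_char n (K : fieldType) (T : finType) (A : {set T}) (b : T -> 'X_{1..n}) p :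
  @gen n K T A b p <-> forall m, p@_m != 0 -> exists2 t, t \in A & (b t <= m)%MM.
Proof.
split.
  move=> [q ->] m nz.
  case: (boolP [exists t in A, b t <= m]%MM) => [/exists_inP[t ? ?]|/exists_inP none].
    by exists t.
  move: nz; rewrite raddf_sum /= big1 ?eqxx // => t tA.
  rewrite mcoeffMXg; case: ifP => // h; case: none; by exists t.
move=> H; rewrite (mpolyE p) big_seq.
have [G0 [GD GM]] := @gen_ideal n K T A b.
apply: big_ind => //.
move=> m; rewrite mcoeff_msupp => /H [t tA le].
rewrite -(submK le) mpolyXD scalerAl; exact: gen_term.
Qed.




Definition mset n (e : {set 'I_n}) : 'X_{1..n} := (\sum_(i in e) U_(i))%MM.

Lemma msetE n (e : {set 'I_n}) j : mset e j = (j \in e).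
Proof.
rewrite /mset mnm_sumE.
case: (boolP (j \in e)) => je.
  rewrite (bigD1 j) //= mnm1E eqxx big1 // => i /andP[_ /negbTE ij].
  by rewrite mnm1E ij.
by rewrite big1 // => i ie; rewrite mnm1E; case: eqP => // ij; rewrite -ij ie in je.
Qed.

Lemma lem_mset n (e : {set 'I_n}) m :
  (mset e <= m)%MM <-> (forall i, i \in e -> (0 < m i)%N).
Proof.
split.
  by move=> /mnm_lepP h i ie; have := h i; rewrite msetE ie.
move=> h; apply/mnm_lepP => i; rewrite msetE; case: (boolP (i \in e)) => // ie.
exact: h.
Qed.

Lemma prodX n (K : fieldType) (e : {set 'I_n}) :
  \prod_(i in e) ('X_i : {mpoly K[n]}) = 'X_[mset e].
Proof.
rewrite /mset; apply: esym.
apply: (big_morph (fun m => ('X_[m] : {mpoly K[n]}))).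
  by move=> x y; rewrite mpolyXD.
by rewrite mpolyX0.
Qed.

Definition cov n (E : {set {set 'I_n}}) (m : 'X_{1..n}) : Prop :=
  exists2 e, e \in E & forall i, i \in e -> (0 < m i)%N.

Lemma edge_gen n (K : fieldType) (E : {set {set 'I_n}}) p :
  @edge_ideal n K E p <-> gen E (@mset n) p.
Proof.
split=> [[q ->]|[q ->]]; exists q; apply: eq_bigr => e _; by rewrite prodX.
Qed.

Lemma edge_char n (K : fieldType) (E : {set {set 'I_n}}) p :
  @edge_ideal n K E p <-> forall m, p@_m != 0 -> cov E m.
Proof.
rewrite edge_gen gen_char; split.
  by move=> h m /h [e eE /lem_mset le]; exists e.
by move=> h m /h [e eE le]; exists e => //; apply/lem_mset.
Qed.

Lemma mon_char n (K : fieldType) (Q : {set 'I_n}) p :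
  @mon_prime n K Q p <-> forall m, p@_m != 0 -> exists2 i, i \in Q & (0 < m i)%N.
Proof.
have ->: @mon_prime n K Q p <-> gen Q (fun i => U_(i)%MM) p by [].
rewrite gen_char; split.
  by move=> h m /h [i iQ le]; exists i => //; rewrite lt0n -lep1mP.
by move=> h m /h [i iQ lt]; exists i => //; rewrite lep1mP -lt0n.
Qed.

Lemma edge_ideal_is n (K : fieldType) (E : {set {set 'I_n}}) : is_ideal (@edge_ideal n K E).
Proof.
have [h0 [hD hM]] := @gen_ideal n K _ E (@mset n).
split; first by apply/edge_gen.
split.
  by move=> p q /edge_gen ? /edge_gen ?; apply/edge_gen; apply: hD.
by move=> s p /edge_gen ?; apply/edge_gen; apply: hM.
Qed.

Lemma char_graded n (K : fieldType) (P : {mpoly K[n]} -> Prop) (C : 'X_{1..n} -> Prop) :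
  (forall p, P p <-> forall m, p@_m != 0 -> C m) -> is_graded P.
Proof.
move=> h p m /h Hp; apply/h => k.
rewrite mcoeffZ mcoeffX.
case: (@eqP (mpoly_multinom__canonical__eqtype_Equality n) m k) => [<-|ne].
  by rewrite mulr1; apply: Hp.
by rewrite mulr0 eqxx.
Qed.

Lemma edge_graded n (K : fieldType) (E : {set {set 'I_n}}) : is_graded (@edge_ideal n K E).
Proof. exact: (char_graded (@edge_char n K E)). Qed.

Lemma mon_graded n (K : fieldType) (Q : {set 'I_n}) : is_graded (@mon_prime n K Q).
Proof. exact: (char_graded (@mon_char n K Q)). Qed.

Lemma mon_ideal n (K : fieldType) (Q : {set 'I_n}) : is_ideal (@mon_prime n K Q).
Proof. exact: (@gen_ideal n K _ Q (fun i => U_(i)%MM)). Qed.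

Lemma edge_ext n (K : fieldType) (E E' : {set {set 'I_n}}) :
  (forall m, cov E m <-> cov E' m) -> forall p, @edge_ideal n K E p <-> @edge_ideal n K E' p.
Proof.
move=> h p; rewrite !edge_char; split=> H m /H; by rewrite h.
Qed.

Lemma mcoeffXjM n (K : fieldType) j (p : {mpoly K[n]}) m :
  ('X_j * p)@_m = if (m j != 0)%N then p@_(m - U_(j)) else 0.
Proof. by rewrite mulrC mcoeffMXg lep1mP. Qed.

Definition colf n (E : {set {set 'I_n}}) j := [set e :\ j | e in E].

Lemma edge_colon n (K : fieldType) (E : {set {set 'I_n}}) j p :
  @edge_ideal n K E ('X_j * p) <-> @edge_ideal n K (colf E j) p.
Proof.
rewrite !edge_char; split.
  move=> H m' nz.
  have: ('X_j * p)@_(m' + U_(j)) != 0.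
    by rewrite mulrC addmC mcoeffMX.
  move=> /H [e eE he]; exists (e :\ j); first by apply: imset_f.
  move=> i; rewrite !inE => /andP[ij ie]; have := he i ie.
  by rewrite mnmDE mnm1E eq_sym (negbTE ij) addn0.
move=> H m; rewrite mcoeffXjM; case: ifP => [mj|]; last by rewrite eqxx.
move=> /H [e' /imsetP[e eE ->] he]; exists e => // i ie.
case: (eqVneq i j) => [->|ij]; first by rewrite lt0n.
have : i \in e :\ j by rewrite !inE ij ie.
move=> /he; rewrite mnmBE mnm1E eq_sym (negbTE ij) subn0 //.
Qed.

Lemma edge_sum n (K : fieldType) (E : {set {set 'I_n}}) j p :
  (exists r s, @edge_ideal n K E r /\ p = r + s * 'X_j) <->
  @edge_ideal n K (E :|: [set [set j]]) p.
Proof.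
split.
  move=> [r [s [/edge_char Hr ->]]]; apply/edge_char => m.
  rewrite mcoeffD => nz.
  case: (eqVneq (r@_m) 0) => [r0|/Hr [e eE he]]; last first.
    by exists e => //; rewrite inE eE.
  move: nz; rewrite r0 add0r mcoeffMXg lep1mP.
  case: ifP => [mj _|]; last by rewrite eqxx.
  exists [set j]; first by rewrite !inE eqxx orbT.
  by move=> i; rewrite inE => /eqP ->; rewrite lt0n.
move=> /edge_gen [q ->].
have [h0 [hD hM]] := @edge_ideal_is n K E.
apply: (big_ind (fun x => exists r s, @edge_ideal n K E r /\ x = r + s * 'X_j)).
- by exists 0, 0; rewrite mul0r addr0.
- move=> x y [r1 [s1 [h1 ->]]] [r2 [s2 [h2 ->]]].
  exists (r1 + r2), (s1 + s2); split; first exact: hD.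
  by rewrite mulrDl addrACA.
- move=> e; rewrite !inE => /orP[eE|/eqP ->].
    exists (q e * 'X_[mset e]), 0; split; last by rewrite mul0r addr0.
    by apply/edge_gen; apply: gen_term.
  exists 0, (q [set j]); split => //.
  by rewrite add0r /mset big_set1.
Qed.




Lemma fdepth_ext n (K : fieldType) (I I' : {mpoly K[n]} -> Prop) k :
  (forall p, I p <-> I' p) -> fdepth_ge I k -> fdepth_ge I' k.
Proof.
move=> h [m [J [H0 H]]]; exists m, J; split => // p; by rewrite H0 h.
Qed.

Lemma fdepth_mono n (K : fieldType) (I : {mpoly K[n]} -> Prop) k k' :
  (k <= k')%N -> fdepth_ge I k' -> fdepth_ge I k.
Proof.
move=> le [m [J [H0 [H1 [H2 [H3 H4]]]]]]; exists m, J; do 4! split => //.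
move=> i /H4 [Q [a [st dm]]]; exists Q, a; split => //; exact: leq_trans dm.
Qed.

Lemma step_ext n (K : fieldType) (J J' : nat -> {mpoly K[n]} -> Prop) i i' Q a :
  (forall p, J i p <-> J' i' p) -> (forall p, J i.+1 p <-> J' i'.+1 p) ->
  filtration_step J' i' Q a -> filtration_step J i Q a.
Proof.
move=> h1 h2 [s1 s2]; split=> p.
  rewrite h2 s1; split=> [[r [s [? ->]]]|[r [s [? ->]]]]; exists r, s; split => //;
    by apply/h1.
by rewrite h1 s2.
Qed.

Lemma glue n (K : fieldType) (I : {mpoly K[n]} -> Prop) j k :
  is_ideal I -> is_graded I ->
  fdepth_ge (fun p => I ('X_j * p)) k ->
  fdepth_ge (fun p => exists r s, I r /\ p = r + s * 'X_j) k ->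
  fdepth_ge I k.
Proof.
move=> [I0 [ID IM]] Igr [m2 [J2 [J20 [J2m [J2id [J2inc J2st]]]]]]
  [m1 [J1 [J10 [J1m [J1id [J1inc J1st]]]]]].
pose F i p := exists r t, I r /\ J2 i t /\ p = r + 'X_j * t.
pose J i := if (i <= m2)%N then F i else J1 (i - m2)%N.
have J2mono : forall i p, (i <= m2)%N -> J2 0%N p -> J2 i p.
  elim=> [//|i IH] p le h; apply: J2inc => //; apply: IH => //; exact: ltnW.
have Fm2 : forall p, F m2 p <-> J1 0%N p.
  move=> p; rewrite J10; split.
    by move=> [r [t [? [_ ->]]]]; exists r, t; rewrite mulrC.
  by move=> [r [s [? ->]]]; exists r, s; rewrite mulrC; split.
have Fid : forall i, (i <= m2)%N -> is_ideal (F i) /\ is_graded (F i).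
  move=> i le; have [[T0 [TD TM]] Tgr] := J2id i le.
  split; first split.
    by exists 0, 0; rewrite mulr0 addr0.
  split.
    move=> p q [r1 [t1 [? [? ->]]]] [r2 [t2 [? [? ->]]]].
    exists (r1 + r2), (t1 + t2); split; first exact: ID.
    split; first exact: TD.
    by rewrite mulrDr addrACA.
  move=> s p [r [t [? [? ->]]]]; exists (s * r), (s * t); split.
    exact: IM.
  split; first exact: TM.
  by rewrite mulrDr mulrCA.
  move=> p m [r [t [Ir [Jt ->]]]].
  rewrite mcoeffD scalerDl mcoeffXjM.
  exists (r@_m *: 'X_[m]),
    (if (m j != 0)%N then t@_(m - U_(j)) *: 'X_[m - U_(j)] else 0).
  split; first exact: Igr.
  case: ifP => mj; split.
  - exact: Tgr.
  - rewrite -scalerAr -mpolyXD addmC submK //; by rewrite lep1mP.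
  - exact: T0.
  - by rewrite scale0r mulr0.
have Fmono : forall i p, (i < m2)%N -> F i p -> F i.+1 p.
  move=> i p lt [r [t [? [? ->]]]]; exists r, t; split => //; split => //.
  by apply: J2inc.
exists (m2 + m1)%N, J; split.
  move=> p; rewrite /J leq0n; split.
    move=> [r [t [Ir [/J20 It ->]]]]; exact: ID.
  move=> Ip; exists p, 0; split => //; split; last by rewrite mulr0 addr0.
  by apply/J20; rewrite mulr0.
split.
  move=> p; rewrite /J; case: ifP => le.
    have e : m1 = 0%N by lia.
    rewrite e addn0; apply/Fm2; by move: (J1m p); rewrite e.
  by rewrite addKn.
split.
  move=> i le; rewrite /J; case: ifP => h; first exact: Fid.
  by apply: J1id; lia.
split.
  move=> i p lt; rewrite /J; case: ifP => h1; case: ifP => h2.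
  - by apply: Fmono.
  - have e : i = m2 by lia.
    rewrite e subSnn; move=> h; apply: J1inc; first lia.
    exact: (proj1 (Fm2 p)).
  - lia.
  - move=> h; rewrite subSn; last lia.
    by apply: J1inc => //; lia.
move=> i lt; case: (ltnP i m2) => h.
  have [Q [a [[st1 st2] dm]]] := J2st i h.
  exists Q, (a + U_(j))%MM; split => //.
  rewrite /filtration_step /J h (ltnW h).
  split=> p.
    split.
      move=> [r [t [Ir [/st1 [r' [s [Jr' ->]]] ->]]]].
      exists (r + 'X_j * r'), s; split.
        by exists r, r'; split => //; split.
      by rewrite mpolyXD; ring.
    move=> [q [s [[r [t [Ir [Jt ->]]]] ->]]].
    exists r, (t + s * 'X_[a]); split => //; split.
      by apply/st1; exists t, s.
    by rewrite mpolyXD; ring.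
  split.
    move=> [r [t [Ir [Jt e]]]].
    have Ic : I ('X_j * (p * 'X_[a] - t)).
      have -> : 'X_j * (p * 'X_[a] - t) = r.
        by apply: (addIr ('X_j * t)); rewrite -e mpolyXD; ring.
      done.
    have [[T0 [TD TM]] _] := J2id i (ltnW h).
    apply/st2.
    have -> : p * 'X_[a] = (p * 'X_[a] - t) + t by rewrite subrK.
    apply: TD => //; apply: J2mono; [exact: ltnW | by apply/J20].
  move=> /st2 Jt; exists 0, (p * 'X_[a]); split => //; split => //.
  by rewrite mpolyXD; ring.
have [Q [a [st dm]]] := J1st (i - m2)%N (ltac:(lia)).
exists Q, a; split => //.
apply: (step_ext (J' := J1) (i' := (i - m2)%N)) => //.
  move=> p; rewrite /J; case: ifP => le.
    have e : i = m2 by lia.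
    by rewrite e subnn; apply: Fm2.
  done.
move=> p; rewrite /J; case: ifP => le; first lia.
by rewrite subSn.
Qed.




Lemma memGS n (G : {set {set 'I_n}}) (s : seq 'I_n) e :
  (e \in G :|: [set [set z] | z in s]) = (e \in G) || has (fun z => e == [set z]) s.
Proof.
rewrite inE; congr (_ || _).
apply/imsetP/hasP => [[z zs ->]|[z zs /eqP ->]]; exists z => //.
Qed.

Lemma GS_nil n (G : {set {set 'I_n}}) : G :|: [set [set z] | z in [::]] = G.
Proof. by apply/setP => e; rewrite memGS /= orbF. Qed.

Lemma GS_cons n (G : {set {set 'I_n}}) y s :
  G :|: [set [set z] | z in y :: s] = (G :|: [set [set y]]) :|: [set [set z] | z in s].
Proof. by apply/setP => e; rewrite !memGS /= !inE orbA. Qed.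

Lemma chain n (K : fieldType) (ys : seq 'I_n) : forall (G : {set {set 'I_n}}) k,
  (forall pre y suf, ys = pre ++ y :: suf ->
     fdepth_ge (fun p => @edge_ideal n K (G :|: [set [set z] | z in pre]) ('X_y * p)) k) ->
  fdepth_ge (@edge_ideal n K (G :|: [set [set z] | z in ys])) k ->
  fdepth_ge (@edge_ideal n K G) k.
Proof.
elim: ys => [|y ys IH] G k Hb Hf; first by move: Hf; rewrite GS_nil.
have [h0 [hD hM]] := @edge_ideal_is n K G.
apply: (glue (j := y)) => //.
- exact: edge_graded.
- by have := Hb [::] y ys erefl; rewrite GS_nil.
apply: (fdepth_ext (I := @edge_ideal n K (G :|: [set [set y]]))).
  by move=> p; rewrite edge_sum.
apply: IH.
  move=> pre y' suf e; rewrite -GS_cons; apply: (Hb (y :: pre) y' suf).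
  by rewrite e.
by rewrite -GS_cons.
Qed.

Definition minf n (X : {set {set 'I_n}}) :=
  [set e in X | [forall f in X, (f \subset e) ==> (f == e)]].

Lemma minf_sub n (X : {set {set 'I_n}}) e :
  e \in X -> exists2 f, f \in minf X & f \subset e.
Proof.
move: {2}#|e| (leqnn #|e|) => k; elim: k e => [|k IH] e.
  move=> c0 eX; exists e => //; rewrite inE eX; apply/forall_inP => f fX.
  apply/implyP => fe; rewrite eqEcard fe /=.
  by move: c0; rewrite leqn0 => /eqP ->.
move=> ck eX.
case: (boolP [forall f in X, (f \subset e) ==> (f == e)]) => h.
  by exists e; rewrite ?inE ?eX.
move: h => /forall_inPn [f fX]; rewrite negb_imply => /andP[fe fne].
have pf : f \proper e by rewrite properEneq fne.
have cf : (#|f| <= k)%N.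
  by have := proper_card pf; lia.
have [g gm ge] := IH f cf fX; exists g => //; exact: subset_trans fe.
Qed.

Lemma minf_in n (X : {set {set 'I_n}}) e : e \in minf X -> e \in X.
Proof. by rewrite inE => /andP[]. Qed.

Lemma minf_min n (X : {set {set 'I_n}}) e f :
  e \in minf X -> f \in X -> f \subset e -> f = e.
Proof.
rewrite inE => /andP[_ /forall_inP h] fX fe; apply/eqP.
by have := h f fX; rewrite fe.
Qed.

Lemma cov_minf n (X : {set {set 'I_n}}) m : cov (minf X) m <-> cov X m.
Proof.
split; first by move=> [e /minf_in eX h]; exists e.
move=> [e eX h]; have [f fm fe] := minf_sub eX; exists f => // i fi.
by apply: h; apply: (subsetP fe).
Qed.

Lemma minf_clutter n (X : {set {set 'I_n}}) : is_clutter setT (minf X).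
Proof.
split; first by move=> e _; apply: subsetT.
by move=> e f em fm ef; exact: (minf_min fm (minf_in em) ef).
Qed.

Local Close Scope ring_scope.


Lemma bigmin_le (I : finType) (P : pred I) (f : I -> nat) x0 i :
  P i -> \big[minn/x0]_(j | P j) f j <= f i.
Proof.
move=> Pi.
have : i \in index_enum I by rewrite mem_index_enum.
elim: (index_enum I) => [//|j s IH]; rewrite inE big_cons.
case/orP => [/eqP <-|/IH h]; first by rewrite Pi geq_minl.
by case: (P j) => //; apply: leq_trans h; rewrite geq_minr.
Qed.

Lemma card_setU_le (T : finType) (A B : {set T}) : #|A :|: B| <= #|A| + #|B|.
Proof. by have := cardsUI A B; lia. Qed.

Lemma dom_self n (E : {set {set 'I_n}}) : edgewise_dominant E E.
Proof.
rewrite /edgewise_dominant subxx /=; apply/forall_inP => v /bigcupP[e eE ve].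
by apply/implyP => /andP[/negP H _]; case: H; apply/exists_inP; exists e.
Qed.

Lemma eps_le n (E F : {set {set 'I_n}}) : edgewise_dominant E F -> epsilon E <= #|F|.
Proof.
move=> d; rewrite /epsilon; apply: bigmin_le.
rewrite d andbT powersetE; by case/andP: d.
Qed.

Lemma eps_attained n (E : {set {set 'I_n}}) :
  exists2 F, edgewise_dominant E F & #|F| = epsilon E.
Proof.
rewrite /epsilon; apply: (big_ind (fun x => exists2 F, edgewise_dominant E F & #|F| = x)).
- by exists E => //; exact: dom_self.
- move=> x y [F1 d1 <-] [F2 d2 <-]; case: (leqP #|F1| #|F2|) => h.
    by exists F1 => //; rewrite (minn_idPl h).
  by exists F2 => //; rewrite (minn_idPr (ltnW h)).
- by move=> F /andP[_ d]; exists F.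
Qed.

Lemma eps_transfer n (E C : {set {set 'I_n}}) (es : {set 'I_n}) (u : 'I_n) :
  (forall f, f \in C -> exists2 e, e \in E & f \subset e) ->
  es \in E -> u \in es -> u \notin Vred C ->
  (forall w, [set w] \in C -> [set w] \notin E -> exists2 z, z \in es & neighbors E w z) ->
  epsilon E + #|Vred C| <= epsilon C + #|Vred E|.
Proof.
move=> Hlift esE ues uC Htriv.
have [FC dFC cFC] := eps_attained C.
pose L (f : {set 'I_n}) := odflt es [pick e in E | f \subset e].
have HL : forall f, f \in C -> L f \in E /\ f \subset L f.
  move=> f fC; rewrite /L; case: pickP => [e /andP[eE fe]|none] //=.
  have [e eE fe] := Hlift f fC; by have := none e; rewrite eE fe.
pose pw (w : 'I_n) := odflt es [pick e in E | w \in e].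
have Hpw : forall w, w \in Vred E -> pw w \in E /\ w \in pw w.
  move=> w /bigcupP[e eE we]; rewrite /pw; case: pickP => [e' /andP[? ?]|none] //=.
  by have := none e; rewrite eE we.
have sVC : Vred C \subset Vred E.
  apply/subsetP => w /bigcupP[c cC wc]; have [e eE ce] := Hlift c cC.
  by apply/bigcupP; exists e => //; apply: (subsetP ce).
pose lost := Vred E :\: Vred C.
have ulost : u \in lost by rewrite inE uC; apply/bigcupP; exists es.
pose F := (L @: FC) :|: [set es] :|: (pw @: (lost :\ u)).
have FCC : FC \subset C by case/andP: dFC.
have inF1 : forall f, f \in FC -> L f \in F.
  by move=> f fF; rewrite !inE; apply/orP; left; apply/orP; left; apply: imset_f.
have inF2 : es \in F by rewrite !inE eqxx orbT.
have inF3 : forall w, w \in lost :\ u -> pw w \in F.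
  by move=> w wl; rewrite inE; apply/orP; right; apply: imset_f.
have nbCE : forall v w, neighbors C v w -> neighbors E v w.
  move=> v w /andP[vw /exists_inP[c cC /andP[vc wc]]]; rewrite /neighbors vw /=.
  have [e eE ce] := Hlift c cC; apply/exists_inP; exists e => //.
  by rewrite (subsetP ce) ?(subsetP ce w).
have FE : F \subset E.
  apply/subsetP => f; rewrite !inE => /orP[/orP[/imsetP[g gF ->]|/eqP ->]|/imsetP[w wl ->]].
  - by case: (HL g (subsetP FCC g gF)).
  - done.
  - move: wl; rewrite !inE => /andP[_ /andP[_ wE]]; by case: (Hpw w wE).
have dom : edgewise_dominant E F.
  rewrite /edgewise_dominant FE /=; apply/forall_inP => v vE.
  apply/implyP => /andP[ncov nE].
  have cov : forall f, f \in F -> v \in f -> False.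
    by move=> f fF vf; case/negP: ncov; apply/exists_inP; exists f.
  case: (boolP (v \in Vred C)) => vC; last first.
    case: (eqVneq v u) => [vu|vu]; first by case: (cov es inF2); rewrite vu.
    have vl : v \in lost :\ u by rewrite !inE vu vC vE.
    by case: (cov _ (inF3 v vl)); case: (Hpw v vE).
  case: (boolP ([set v] \in C)) => vsC.
    have [z zes nb] := Htriv v vsC nE.
    by apply/existsP; exists z; rewrite nb /=; apply/exists_inP; exists es.
  have ncovC : ~~ [exists f in FC, v \in f].
    apply/negP => /exists_inP[f fF vf]; apply: (cov (L f) (inF1 f fF)).
    by case: (HL f (subsetP FCC f fF)) => _ /subsetP; apply.
  move: dFC => /andP[_ /forall_inP /(_ v vC)]; rewrite ncovC vsC /=.
  move=> /existsP[w /andP[nb /exists_inP[f fF wf]]].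
  apply/existsP; exists w; rewrite nbCE //=; apply/exists_inP; exists (L f) => //.
    exact: inF1.
  by case: (HL f (subsetP FCC f fF)) => _ /subsetP; apply.
have e1 := eps_le dom.
have c1 : #|F| <= #|FC| + 1 + #|lost :\ u|.
  have := card_setU_le (L @: FC :|: [set es]) (pw @: (lost :\ u)).
  have := card_setU_le (L @: FC) [set es].
  have := leq_imset_card L FC; have := leq_imset_card pw (lost :\ u).
  rewrite /F cards1 => h1 h2 h3 h4; apply: (leq_trans h4); apply: leq_add h1; apply: (leq_trans h3); by rewrite leq_add2r.
have c2 := cardsD1 u lost; rewrite ulost /= in c2.
have c3 : #|lost| = #|Vred E| - #|Vred C| by rewrite cardsDS.
have c4 := subset_leq_card sVC.
have h : epsilon E <= #|FC| + (#|Vred E| - #|Vred C|).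
  rewrite -c3 c2 addnA; exact: leq_trans e1 c1.
rewrite -cFC; rewrite -(leq_add2r #|Vred C|) -addnA subnK // in h.
Qed.

Local Open Scope ring_scope.




Definition NTset n (E : {set {set 'I_n}}) := \bigcup_(e in E | (1 < #|e|)%N) e.

Lemma nb_sym n (E : {set {set 'I_n}}) v w : neighbors E v w -> neighbors E w v.
Proof.
move=> /andP[vw /exists_inP[e eE /andP[ve we]]]; rewrite /neighbors eq_sym vw /=.
by apply/exists_inP; exists e => //; rewrite we ve.
Qed.

Lemma nb_edge n (E : {set {set 'I_n}}) v w :
  neighbors E v w -> exists2 e, e \in E & (v \in e) && (w \in e).
Proof. by move=> /andP[_ /exists_inP[e eE h]]; exists e. Qed.

Lemma nb_neq n (E : {set {set 'I_n}}) v w : neighbors E v w -> v != w.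
Proof. by case/andP. Qed.

Lemma arith a b c d N : (a + c <= b + d)%N -> (c <= N)%N -> (d <= N)%N ->
  (a + N - d <= b + N - c)%N.
Proof. lia. Qed.

Lemma cardV n (E : {set {set 'I_n}}) : (#|Vred E| <= n)%N.
Proof. by have := max_card (mem (Vred E)); rewrite card_ord. Qed.

Lemma fdepth_total n (K : fieldType) (I : {mpoly K[n]} -> Prop) k :
  is_ideal I -> is_graded I -> (forall p, I p) -> fdepth_ge I k.
Proof.
move=> Ii Ig Iall; exists 0%N, (fun _ => I); split; first by [].
split; first by [].
split; first by move=> i _; split.
by split => i.
Qed.

Lemma base_case n (K : fieldType) (E : {set {set 'I_n}}) :
  (forall e, e \in E -> #|e| = 1%N) ->
  fdepth_ge (@edge_ideal n K E) (epsilon E + n - #|Vred E|).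
Proof.
move=> Hc.
have single : forall e v, e \in E -> v \in e -> e = [set v].
  move=> e v eE ve; have /cards1P[x ex] : #|e| == 1%N by rewrite Hc.
  by move: ve; rewrite ex inE => /eqP ->.
have eps0 : epsilon E = 0%N.
  have d0 : edgewise_dominant E set0.
    rewrite /edgewise_dominant sub0set /=.
    apply/forall_inP => v /bigcupP[e eE ve]; apply/implyP => /andP[_ H].
    by move: H; rewrite -(single e v eE ve) eE.
  by have := eps_le d0; rewrite cards0 leqn0 => /eqP.
have [h0 [hD hM]] := @edge_ideal_is n K E.
exists 1%N, (fun i => if i == 0%N then @edge_ideal n K E else (fun _ => True)).
split; first by [].
split; first by [].
split.
  case=> [_|i le] /=; first by split; [exact: edge_ideal_is | exact: edge_graded].
  split; last by [].
  by split; [|split].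
split; first by move=> [|i] //.
move=> [|i] // _; exists (Vred E), 0%MM; split; last first.
  by rewrite eps0 add0n /dim_quot_mon_prime.
split=> p /=.
  split=> // _; exists 0, p; split => //; by rewrite mpolyX0 mulr1 add0r.
rewrite mpolyX0 mulr1 edge_char mon_char; split.
  move=> H m /H [e eE he].
  have /cards1P[x ex] : #|e| == 1%N by rewrite Hc.
  exists x; first by apply/bigcupP; exists e => //; rewrite ex inE.
  by apply: he; rewrite ex inE.
move=> H m /H [i /bigcupP[e eE ie] mi]; exists e => // j je.
by move: je; rewrite (single e i eE ie) inE => /eqP ->.
Qed.

Lemma card2_lt (T : finType) (A : {set T}) a b :
  a \in A -> b \in A -> a != b -> (1 < #|A|)%N.
Proof.
move=> aA bA ab; have sub : [set a; b] \subset A.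
  by apply/subsetP => x; rewrite !inE => /orP[/eqP->|/eqP->].
by have := subset_leq_card sub; rewrite cards2 ab.
Qed.

Lemma setD1_notin (T : finType) (A : {set T}) y : y \notin A -> A :\ y = A.
Proof.
move=> yA; apply/setP => x; rewrite !inE; case: eqP => // ->; by rewrite (negbTE yA).
Qed.

Lemma main n (K : fieldType) : forall N (E : {set {set 'I_n}}),
  (#|NTset E| < N)%N -> is_clutter setT E ->
  fdepth_ge (@edge_ideal n K E) (epsilon E + n - #|Vred E|).
Proof.
elim=> [|N IH] E ltN cE; first by [].
case: (boolP (set0 \in E)) => [E0|nE0].
  apply: fdepth_total; [exact: edge_ideal_is | exact: edge_graded |].
  by move=> p; apply/edge_char => m _; exists set0 => // i; rewrite inE.
case: (pickP [pred e in E | (1 < #|e|)%N]) => [e0 /andP[e0E ce0]|none]; last first.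
  apply: base_case => e eE; have := none e; rewrite /= eE /= => /negbT; rewrite -leqNgt.
  have : (0 < #|e|)%N.
    rewrite card_gt0; apply: contraNneq nE0 => <-; done.
  by move=> h1 h2; apply/eqP; rewrite eqn_leq h2 h1.
have /card_gt0P[v ve0] : (0 < #|e0|)%N by lia.
pose Y := enum [set w | neighbors E v w].
have memY : forall z, (z \in Y) = neighbors E v z by move=> z; rewrite mem_enum inE.
have key : forall C, is_clutter setT C -> (#|NTset C| < #|NTset E|)%N ->
    (epsilon E + #|Vred C| <= epsilon C + #|Vred E|)%N ->
    fdepth_ge (@edge_ideal n K C) (epsilon E + n - #|Vred E|).
  move=> C cC ltC ineq; apply: (fdepth_mono (k' := (epsilon C + n - #|Vred C|)%N)).
    by apply: arith => //; exact: cardV.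
  apply: IH => //; lia.
apply: (chain (ys := Y)).
- move=> pre y suf eY.
  have yY : y \in Y by rewrite eY mem_cat inE eqxx orbT.
  have preY : forall z, z \in pre -> neighbors E v z.
    by move=> z zp; rewrite -memY eY mem_cat zp.
  have nvy : neighbors E v y by rewrite -memY.
  have [es esE /andP[ves yes]] := nb_edge nvy.
  pose Gp := E :|: [set [set z] | z in pre].
  pose C := minf (colf Gp y).
  apply: (fdepth_ext (I := @edge_ideal n K C)).
    move=> p; rewrite edge_colon; apply: edge_ext => m; exact: cov_minf.
  have inC : forall c, c \in C -> exists2 g, g \in Gp & c = g :\ y.
    by move=> c /minf_in /imsetP[g gG ->]; exists g.
  have yC : y \notin Vred C.
    apply/negP => /bigcupP[c cC yc]; have [g _ ec] := inC c cC.
    by move: yc; rewrite ec !inE eqxx.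
  apply: key.
  + exact: minf_clutter.
  + have ysub : NTset C \subset NTset E :\ y.
      apply/subsetP => x /bigcupP[c /andP[cC cc] xc].
      have [g gG ec] := inC c cC.
      move: gG; rewrite memGS => /orP[gE|/hasP[z zp /eqP gz]].
        have xg : (x != y) && (x \in g) by move: xc; rewrite ec !inE.
        case/andP: xg => xy xg; rewrite !inE xy /=.
        apply/bigcupP; exists g => //; rewrite gE /=.
        apply: (leq_trans cc); apply: subset_leq_card; rewrite ec; exact: subD1set.
      exfalso; have : (#|c| <= #|g|)%N.
        by apply: subset_leq_card; rewrite ec; exact: subD1set.
      by rewrite gz cards1; lia.
    have yNT : y \in NTset E.
      apply/bigcupP; exists es => //; rewrite esE /=.
      exact: (card2_lt ves yes (nb_neq nvy)).
    have := subset_leq_card ysub; have := cardsD1 y (NTset E); rewrite yNT /=.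
    by move=> -> h; rewrite add1n ltnS.
  + apply: (eps_transfer (es := es) (u := y)) => //.
    * move=> c cC; have [g gG ->] := inC c cC.
      move: gG; rewrite memGS => /orP[gE|/hasP[z zp /eqP ->]].
        by exists g => //; exact: subD1set.
      have [e eE /andP[_ ze]] := nb_edge (preY z zp).
      exists e => //; apply: subset_trans (subD1set _ _) _; by rewrite sub1set.
    * move=> w wC wE; have [g gG eg] := inC _ wC.
      move: gG; rewrite memGS => /orP[gE|/hasP[z zp /eqP gz]].
        have : w \in g :\ y by rewrite -eg inE.
        rewrite !inE => /andP[wy wg].
        have yg : y \in g.
          apply/negPn/negP => yg; move: wE; rewrite eg (setD1_notin yg) gE; done.
        exists y => //; rewrite /neighbors wy /=; apply/exists_inP; exists g => //.
        by rewrite wg yg.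
      have : w \in [set z] :\ y by rewrite -gz -eg inE.
      rewrite !inE => /andP[_ /eqP wz].
      by exists v => //; apply: nb_sym; rewrite wz; exact: preY.
- pose Gf := E :|: [set [set z] | z in Y].
  pose C := minf Gf.
  apply: (fdepth_ext (I := @edge_ideal n K C)).
    by move=> p; apply: edge_ext => m; exact: cov_minf.
  have vC : v \notin Vred C.
    apply/negP => /bigcupP[c cC vc].
    have := minf_in cC; rewrite memGS => /orP[cEE|/hasP[z zY /eqP cz]]; last first.
      move: vc; rewrite cz inE => /eqP vz; move: zY; rewrite memY -vz.
      by move=> /nb_neq; rewrite eqxx.
    case: (boolP (c \subset [set v])) => sub.
      have cv : c = [set v] by apply/eqP; rewrite eqEsubset sub sub1set vc.
      have ce : c = e0 by apply: (proj2 cE) => //; rewrite cv sub1set.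
      by move: ce0; rewrite -ce cv cards1.
    move: sub => /subsetPn [z zc zv].
    have nvz : neighbors E v z.
      rewrite /neighbors; apply/andP; split.
        by move: zv; rewrite inE eq_sym.
      by apply/exists_inP; exists c => //; rewrite vc zc.
    have zG : [set z] \in Gf by rewrite memGS; apply/orP; right; apply/hasP; exists z; rewrite ?memY.
    have := minf_min cC zG; rewrite sub1set zc => /(_ isT) zc'.
    by move: vc zv; rewrite -zc' !inE => /eqP ->; rewrite eqxx.
  apply: key.
  + exact: minf_clutter.
  + have vsub : NTset C \subset NTset E :\ v.
      apply/subsetP => x /bigcupP[c /andP[cC cc] xc].
      have := minf_in cC; rewrite memGS => /orP[cEE|/hasP[z zY /eqP cz]]; last first.
        by move: cc; rewrite cz cards1.
      have xv : x != v.
        apply/negP => /eqP xv; case/negP: vC; apply/bigcupP; exists c => //.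
        by rewrite -xv.
      by rewrite !inE xv /=; apply/bigcupP; exists c => //; rewrite cEE.
    have vNT : v \in NTset E by apply/bigcupP; exists e0 => //; rewrite e0E.
    have := subset_leq_card vsub; have := cardsD1 v (NTset E); rewrite vNT /=.
    by move=> -> h; rewrite add1n ltnS.
  + apply: (eps_transfer (es := e0) (u := v)) => //.
    * move=> c cC; have := minf_in cC; rewrite memGS => /orP[cEE|/hasP[z zY /eqP ->]].
        by exists c.
      have nz : neighbors E v z by rewrite -memY.
      have [e eE /andP[_ ze]] := nb_edge nz.
      by exists e => //; rewrite sub1set.
    * move=> w wC wE; move: (minf_in wC); rewrite memGS (negbTE wE) /=.
      move=> /hasP[z zY /eqP /set1_inj wz].
      by exists v => //; apply: nb_sym; rewrite wz -memY.
Qed.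

Theorem theorem3p6 (K : fieldType) (n : nat)
    (V : {set 'I_n}) (E : {set {set 'I_n}}) :
  is_clutter V E ->
  fdepth_ge (@edge_ideal n K E) (epsilon E + n - #|Vred E|).
Proof.
move=> [_ cE]; apply: (@main n K (#|NTset E|.+1)).
  exact: ltnSn.
by split => // e _; exact: subsetT.
Qed.
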